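(* Let $\alpha>-1$ and let $n\ge 0$ be an integer, and let $\lambda_s$ be the smallest eigenvalue of the real symmetric matrix $\big((\alpha+1)_{j+k}\big)_{j,k=0}^{n}$. Then \[ \lambda_s\ \ge\ \left\{\sum_{\ell=0}^{n}\frac{\ell!}{(\alpha+1)_\ell}\,\big(L_\ell^{(\alpha)}(-1)\big)^2\right\}^{-1} =\frac{(\alpha+1)_n}{(n+1)!}\cdot\frac{1}{L_n^{(\alpha+1)}(-1)\,L_n^{(\alpha)}(-1)-L_{n+1}^{(\alpha)}(-1)\,L_{n-1}^{(\alpha+1)}(-1)} . \]
   Context: $(z)_m=z(z+1)\cdots(z+m-1)$, $(z)_0=1$. The Laguerre polynomials are $L_n^{(\alpha)}(x)=\frac{(\alpha+1)_n}{n!}\sum_{k=0}^{n}\frac{(-n)_k\,x^k}{(\alpha+1)_k\,k!}$ for $n\ge0$, with the convention $L_{-1}^{(\alpha)}(x)=0$. *)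

(* Defs.v *)
From HB Require Import structures.
From mathcomp Require Import all_boot all_order all_algebra.
Set Implicit Arguments. Unset Strict Implicit. Unset Printing Implicit Defensive.
Import Order.TTheory GRing.Theory Num.Theory.
Local Open Scope ring_scope.

Definition poch (R : ringType) (z : R) (m : nat) : R :=
  \prod_(i < m) (z + i%:R).

Definition laguerre (R : fieldType) (n : nat) (a x : R) : R :=
  poch (a + 1) n / (n`!)%:R *
  \sum_(k < n.+1) poch (- (n%:R)) k * x ^+ k / (poch (a + 1) k * (k`!)%:R).

Definition laguerre_pred (R : fieldType) (n : nat) (a x : R) : R :=
  if n is m.+1 then laguerre m a x else 0.

Definition hankel_poch (R : ringType) (n : nat) (a : R) : 'M[R]_n.+1 :=
  \matrix_(j < n.+1, k < n.+1) poch (a + 1) (j + k).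

(* Main.v *)
Require Import Defs.
From HB Require Import structures.
From mathcomp Require Import all_boot all_order all_algebra.
From Stdlib Require Import Ring Field.
Import Order.TTheory GRing.Theory Num.Theory.
Local Open Scope ring_scope.
Set Implicit Arguments. Unset Strict Implicit.

Section Lag.
Variable R : rcfType.
Definition addR (x y : R) : R := x + y.
Definition mulR (x y : R) : R := x * y.
Definition oppR (x : R) : R := - x.
Definition subR (x y : R) : R := x - y.
Definition zeroR : R := 0.
Definition oneR : R := 1.
Definition invR (x : R) : R := x^-1.
Definition divR (x y : R) : R := x / y.
Lemma RR : @ring_theory R zeroR oneR addR mulR subR oppR eq.
Proof. split=> *; rewrite /addR/mulR/subR/oppR/zeroR/oneR /=; [exact: add0r|exact: addrC|exact: addrA|exact: mul1r|exact: mulrC|exact: mulrA|exact: mulrDl|done|exact: subrr]. Qed.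
Lemma RF : @field_theory R zeroR oneR addR mulR subR oppR divR invR eq.
Proof. split=> //=; [exact: RR| rewrite /oneR/zeroR; apply/eqP; exact: oner_neq0| move=> p Hp; exact: mulVf (introN eqP Hp)]. Qed.
Add Field RFf : RF.
Definition natR (n : nat) : R := n%:R.
Definition pochR (x : R) (k : nat) : R := poch x k.
Definition lagR (n : nat) (a x : R) : R := laguerre n a x.
Ltac rfold := match goal with |- @eq _ ?a ?b => change (@eq R a b) end;
  rewrite ?mulr0n ?mulr1n ?expr2 -?/(natR _) -?/(natR _) -?/(pochR _ _) -?/(lagR _ _ _) -?/(divR _ _) -?/(invR _) -?/(subR _ _) -?/(oppR _) -?/(mulR _ _) -?/(addR _ _) -?/zeroR -?/oneR.
Ltac rring := rfold; ring.
Ltac rfield := rfold; field; rewrite /zeroR /=.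

Implicit Types (x y z : R).
Notation P := (@poch R).

Lemma poch0 x : P x 0 = 1. Proof. by rewrite /poch big_ord0. Qed.
Lemma pochS x k : P x k.+1 = P x k * (x + k%:R). Proof. by rewrite /poch big_ord_recr. Qed.
Lemma pochSl x k : P x k.+1 = x * P (x + 1) k.
Proof.
rewrite /poch big_ord_recl addr0; congr (_ * _); apply: eq_bigr => i _.
rewrite lift0 -natr1; rring.
Qed.
Lemma poch_gt0 x k : 0 < x -> 0 < P x k.
Proof.
move=> hx; rewrite /poch; apply: prodr_gt0 => i _.
by rewrite (lt_le_trans hx) // lerDl ler0n.
Qed.
Lemma poch_neq0 x k : 0 < x -> P x k != 0.
Proof. by move=> hx; rewrite gt_eqF // poch_gt0. Qed.
Lemma pochD x j k : P x (j + k) = P x j * P (x + j%:R) k.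
Proof.
elim: k => [|k IH]; first by rewrite addn0 poch0 mulr1.
rewrite addnS !pochS IH natrD; rring.
Qed.
Lemma poch_step x k : P (x + 1) k.+1 = P x k.+1 + k.+1%:R * P (x + 1) k.
Proof. rewrite (pochSl x) (pochS (x + 1)) -natr1; rring. Qed.

Lemma fact_neq0 n : (n`!)%:R != 0 :> R.
Proof. by rewrite pnatr_eq0 -lt0n fact_gt0. Qed.

Lemma sumC_widen (m N : nat) (F : nat -> R) : (m < N)%N ->
  \sum_(i < N) 'C(m, i)%:R * F i = \sum_(i < m.+1) 'C(m, i)%:R * F i.
Proof.
move=> hm; rewrite (big_ord_widen N (fun i => 'C(m,i)%:R * F i) hm) [RHS]big_mkcond /=.
apply: eq_bigr => i _; case: ifP => // /negbT; rewrite -leqNgt => h.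
by rewrite bin_small ?mul0r.
Qed.

Lemma sumC_pascal n (f : nat -> R) :
  \sum_(j < n.+2) 'C(n.+1, j)%:R * f j =
  \sum_(j < n.+1) 'C(n, j)%:R * f j + \sum_(j < n.+1) 'C(n, j)%:R * f j.+1.
Proof.
rewrite big_ord_recl /= (eq_bigr (fun j : 'I_n.+1 => 'C(n, j.+1)%:R * f j.+1 + 'C(n,j)%:R * f j.+1)); last first.
  by move=> j _; rewrite binS natrD mulrDl.
rewrite big_split /= addrA; congr (_ + _).
rewrite [in RHS]big_ord_recl big_ord_recr /= (bin_small (ltnSn n)) mul0r addr0 !bin0.
congr (_ + _); apply: eq_bigr => j _; by rewrite /bump...
Qed.


Lemma G_id j : forall x k, 0 < x ->
  \sum_(i < j.+1) 'C(j, i)%:R * ('C(k, i)%:R * (i`!)%:R / P x i)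
  = P (x + j%:R) k / P x k.
Proof.
elim: j => [|j IH] x k hx.
  rewrite big_ord_recl big_ord0 /= !bin0 addr0 poch0 addr0 divff ?poch_neq0 //.
  by rewrite fact0 !mul1r invr1 ?mulr1 ?mul1r.
rewrite (sumC_pascal j (fun i => 'C(k, i)%:R * (i`!)%:R / P x i)) IH //.
case: k => [|k].
  rewrite big1 => [|i _]; last by rewrite bin0n /= !mul0r mulr0.
  by rewrite !poch0 addr0.
have hx1 : 0 < x + 1 by rewrite (lt_le_trans hx) // lerDl.
rewrite (eq_bigr (fun i : 'I_j.+1 => k.+1%:R / x * ('C(j, i)%:R * ('C(k, i)%:R * (i`!)%:R / P (x + 1) i)))); last first.
  move=> i _.
  have hb : 'C(k.+1, i.+1)%:R = k.+1%:R * 'C(k, i)%:R / i.+1%:R :> R.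
    have e := mul_bin_diag k.+1 i; rewrite /= in e.
    by rewrite -natrM e natrM mulrC mulKf // pnatr_eq0.
  have hi : i.+1%:R != 0 :> R by rewrite pnatr_eq0.
  have hx0 : x != 0 by rewrite gt_eqF.
  have hp := poch_neq0 i hx1.
  rewrite hb factS natrM pochSl /=.
  move: hi hx0 hp; move=> /eqP hi /eqP hx0 /eqP hp.
  rfield; tauto.
rewrite -mulr_sumr IH //.
have hx0 : x != 0 by rewrite gt_eqF.
have hp := poch_neq0 k hx1.
rewrite (pochSl x k) -[j.+1%:R]natr1 addrA (addrAC x 1) poch_step.
move: hx0 hp => /eqP hx0 /eqP hp.
rfield; tauto.
Qed.

Lemma H_id i : forall j,
  \sum_(k < i.+1) 'C(i, k)%:R * ((-1) ^+ (k + j) * 'C(k, j)%:R) = (i == j)%:R :> R.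
Proof.
elim: i => [|i IH] j.
  rewrite big_ord_recl big_ord0 addr0 /= bin0.
  by case: j => [|j]; rewrite /= ?expr0 ?mul1r ?mulr0 ?mul0r.
rewrite (sumC_pascal i (fun k => (-1) ^+ (k + j) * 'C(k, j)%:R)) IH.
case: j => [|j].
  rewrite (eq_bigr (fun k : 'I_i.+1 => - ('C(i, k)%:R * ((-1) ^+ (k + 0) * 'C(k, 0)%:R)))) => [|k _].
    by rewrite sumrN IH subrr.
  rewrite !bin0 !addn0 exprS; rring.
rewrite (eq_bigr (fun k : 'I_i.+1 => 'C(i, k)%:R * ((-1) ^+ (k + j) * 'C(k, j)%:R) - 'C(i, k)%:R * ((-1) ^+ (k + j.+1) * 'C(k, j.+1)%:R))) => [|k _].
  rewrite sumrB !IH /=; rring.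
rewrite binS natrD !addnS !addSn !exprS; rring.
Qed.

Lemma poch_negm1 l k : P (- l%:R) k * (-1) ^+ k = ('C(l, k) * k`!)%:R.
Proof.
elim: k => [|k IH]; first by rewrite poch0 expr0 mulr1 bin0.
have -> : P (- l%:R) k.+1 * (-1) ^+ k.+1 = (P (- l%:R) k * (-1) ^+ k) * (l%:R - k%:R).
  rewrite pochS exprS; rring.
rewrite IH !bin_ffact ffactnSr natrM.
case: (leqP k l) => h; first by rewrite natrB.
case: (leqP k l) => hkl; first by rewrite natrB.
rewrite ffact_small // !mul0r. reflexivity.
Qed.

Definition sx x n : R := \sum_(j < n.+1) 'C(n, j)%:R * (P x j)^-1.

Lemma lag_s n (a : R) : 0 < a + 1 ->
  laguerre n a (-1) = P (a + 1) n / (n`!)%:R * sx (a + 1) n.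
Proof.
move=> ha; rewrite /laguerre /sx; congr (_ * _); apply: eq_bigr => k _.
have hf := fact_neq0 k; have hp := poch_neq0 k ha.
rewrite poch_negm1 natrM.
move: hf hp => /eqP hf /eqP hp; rfield; tauto.
Qed.

Lemma sx_A x n : 0 < x -> sx x n.+1 = sx x n + sx (x + 1) n / x.
Proof.
move=> hx; rewrite /sx (sumC_pascal n (fun j => (P x j)^-1)); congr (_ + _).
rewrite mulr_suml; apply: eq_bigr => j _.
by rewrite pochSl invfM mulrCA mulrC.
Qed.

Lemma sx_B x n : 0 < x -> sx x n.+1 = sx (x + 1) n.+1 + n.+1%:R / (x * (x + 1)) * sx (x + 1 + 1) n.
Proof.
move=> hx; have hx1 : 0 < x + 1 by rewrite (lt_le_trans hx) // lerDl.
have hx0 : x != 0 by rewrite gt_eqF.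
have hx10 : x + 1 != 0 by rewrite gt_eqF.
rewrite /sx.
rewrite (eq_bigr (fun j : 'I_n.+2 => 'C(n.+1, j)%:R * (P (x + 1) j)^-1 + x^-1 * ('C(n.+1, j)%:R * j%:R * (P (x + 1) j)^-1))); last first.
  move=> j _.
  have e : P x j * (x + j%:R) = x * P (x + 1) j by rewrite -pochS pochSl.
  have hp := poch_neq0 j hx; have hp1 := poch_neq0 j hx1.
  have -> : (P x j)^-1 = (x + j%:R) / (x * P (x + 1) j).
    have hxj : x + j%:R != 0 by rewrite gt_eqF // (lt_le_trans hx) // lerDl.
    rewrite -e; move: hp hxj => /eqP hp /eqP hxj; rfield; tauto.
  move: hx0 hp1 => /eqP hx0 /eqP hp1; rfield; tauto.
rewrite big_split /=; congr (_ + _).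
rewrite -mulr_sumr big_ord_recl /= mulr0 mul0r add0r mulr_sumr mulr_sumr.
apply: eq_bigr => j _; rewrite /=.
have e := mul_bin_diag n.+1 j; rewrite /= in e.
have hx2 : 0 < x + 1 + 1 by rewrite (lt_le_trans hx1) // lerDl.
have hp2 := poch_neq0 j hx2.
rewrite pochSl.
have -> : 'C(n.+1, j.+1)%:R * j.+1%:R = n.+1%:R * 'C(n, j)%:R :> R by rewrite -!natrM mulnC -e.
move: hx0 hx10 hp2 => /eqP hx0 /eqP hx10 /eqP hp2.
rfield; tauto.
Qed.

Lemma gt0S x : 0 < x -> 0 < x + 1.
Proof. by move=> hx; rewrite (lt_le_trans hx) // lerDl. Qed.

Lemma R3 (a : R) n : 0 < a + 1 ->
  n.+1%:R * laguerre n.+1 a (-1) = (n%:R + (a + 1)) * laguerre n a (-1) + laguerre n (a + 1) (-1).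
Proof.
move=> hc; have hc1 := gt0S hc.
rewrite !lag_s // sx_A //.
have e1 : P (a + 1 + 1) n = P (a + 1) n * (a + 1 + n%:R) / (a + 1).
  have hc0 : a + 1 != 0 by rewrite gt_eqF.
  rewrite -pochS pochSl; move: hc0 => /eqP hc0; rfield; tauto.
rewrite e1 pochS factS natrM.
have hf := fact_neq0 n; have hn : n.+1%:R != 0 :> R by rewrite pnatr_eq0.
have hc0 : a + 1 != 0 by rewrite gt_eqF.
move: hf hn hc0 => /eqP hf /eqP hn /eqP hc0; rfield; tauto.
Qed.

Lemma R1 (a : R) m : 0 < a + 1 ->
  laguerre m.+1 (a + 1) (-1) = laguerre m (a + 1) (-1) + laguerre m.+1 a (-1).
Proof.
move=> hc; have hc1 := gt0S hc.
rewrite !lag_s // (@sx_B (a + 1) m hc) (@sx_A (a + 1 + 1) m hc1) (pochS (a + 1 + 1)) (pochSl (a + 1) m) factS natrM.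
have hf := fact_neq0 m; have hn : m.+1%:R != 0 :> R by rewrite pnatr_eq0.
have hc0 : a + 1 != 0 by rewrite gt_eqF.
have hc10 : a + 1 + 1 != 0 by rewrite gt_eqF.
rewrite -[m.+1%:R]natr1 in hn *; move: hf hn hc0 hc10 => /eqP hf /eqP hn /eqP hc0 /eqP hc10; rfield; tauto.
Qed.

Lemma lag0 (a : R) : 0 < a + 1 -> laguerre 0 a (-1) = 1.
Proof.
move=> hc; rewrite lag_s // /sx big_ord_recl big_ord0 /= poch0 fact0 addr0.
rewrite ?mulr1n; rfold; field; rewrite /zeroR /=; apply/eqP; exact: oner_neq0.
Qed.

Lemma pnext (a : R) n : 0 < a + 1 ->
  laguerre n.+1 a (-1) = ((n%:R + (a + 1)) * laguerre n a (-1) + laguerre n (a + 1) (-1)) / n.+1%:R.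
Proof.
move=> hc; rewrite -R3 // mulrC mulKf // pnatr_eq0. exact: isT.
Qed.

Lemma CD (a : R) n : 0 < a + 1 ->
  \sum_(l < n.+1) (l`!)%:R / P (a + 1) l * (laguerre l a (-1)) ^+ 2 =
  (n`!)%:R / P (a + 1) n * ((1 - a) * laguerre n (a + 1) (-1) * laguerre n a (-1)
     + (n%:R + (a + 1)) * laguerre n a (-1) ^+ 2 - laguerre n (a + 1) (-1) ^+ 2).
Proof.
move=> hc; have hc1 := gt0S hc.
elim: n => [|n IH].
  rewrite big_ord_recl big_ord0 /= !lag0 // fact0 poch0 addr0; rfield; apply/eqP; exact: oner_neq0.
rewrite big_ord_recr /= IH R1 // pnext // pochS factS natrM -[n.+1%:R]natr1.
have hf := fact_neq0 n; have hn : n%:R + 1 != 0 :> R by rewrite natr1 pnatr_eq0.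
have hp := poch_neq0 n hc.
have hcn : a + 1 + n%:R != 0 by rewrite gt_eqF // (lt_le_trans hc) // lerDl.
move: hf hn hp hcn => /eqP hf /eqP hn /eqP hp /eqP hcn; rfield; tauto.
Qed.

Lemma CD2 (a : R) n : 0 < a + 1 ->
  \sum_(l < n.+1) (l`!)%:R / P (a + 1) l * (laguerre l a (-1)) ^+ 2 =
  ((n.+1)`!)%:R / P (a + 1) n * (laguerre n (a + 1) (-1) * laguerre n a (-1)
     - laguerre n.+1 a (-1) * laguerre_pred n (a + 1) (-1)).
Proof.
move=> hc; have hc1 := gt0S hc.
have -> : laguerre_pred n (a + 1) (-1) = laguerre n (a + 1) (-1) - laguerre n a (-1).
  case: n => [|m] /=; first by rewrite !lag0 // subrr.
  rewrite R1 //; rring.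
rewrite CD // pnext // factS natrM -[n.+1%:R]natr1.
have hf := fact_neq0 n; have hn : n%:R + 1 != 0 :> R by rewrite natr1 pnatr_eq0.
have hp := poch_neq0 n hc.
move: hf hn hp => /eqP hf /eqP hn /eqP hp; rfield; tauto.
Qed.

Definition Lm (c : R) N : 'M[R]_N := \matrix_(j < N, i < N) ('C(j, i)%:R * P c j / P c i).
Definition dv (c : R) N : 'rV[R]_N := \row_(i < N) ((i`!)%:R * P c i).
Definition Mm (c : R) N : 'M[R]_N :=
  \matrix_(i < N, j < N) ((-1) ^+ (i + j) * 'C(i, j)%:R * P c i / P c j).

Lemma F1 (c : R) N : 0 < c ->
  \matrix_(j < N, k < N) P c (j + k) = Lm c N *m diag_mx (dv c N) *m (Lm c N)^T.
Proof.
move=> hc; apply/matrixP => j k; rewrite mul_mx_diag !mxE.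
rewrite (eq_bigr (fun i : 'I_N => (P c j * P c k) * ('C(j, i)%:R * ('C(k, i)%:R * (i`!)%:R / P c i)))); last first.
  move=> i _; rewrite !mxE.
  have hp := poch_neq0 i hc.
  move: hp => /eqP hp; rfield; tauto.
rewrite -mulr_sumr (@sumC_widen j N (fun i => 'C(k, i)%:R * (i`!)%:R / P c i) (ltn_ord j)) G_id //.
have hpk := poch_neq0 k hc; rewrite pochD; move: hpk => /eqP hpk; rfield; tauto.
Qed.

Lemma F2 (c : R) N : 0 < c -> Lm c N *m Mm c N = 1%:M.
Proof.
move=> hc; apply/matrixP => i j; rewrite !mxE.
rewrite (eq_bigr (fun k : 'I_N => (P c i / P c j) * ('C(i, k)%:R * ((-1) ^+ (k + j) * 'C(k, j)%:R)))); last first.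
  move=> k _; rewrite !mxE.
  have hp := poch_neq0 k hc; have hpj := poch_neq0 j hc.
  move: hp hpj => /eqP hp /eqP hpj; rfield; tauto.
rewrite -mulr_sumr (@sumC_widen i N (fun k => (-1) ^+ (k + j) * 'C(k, j)%:R) (ltn_ord i)) H_id.
case: (eqVneq i j) => [->|hne]; first by rewrite eqxx divff ?mulr1 // poch_neq0.
have hne' : (nat_of_ord i == nat_of_ord j) = false by apply/negbTE.
rewrite hne' mulr0; reflexivity.
Qed.

Lemma le_sum_sq (N : nat) (v : 'rV[R]_N) i : v 0 i ^+ 2 <= \sum_(k < N) v 0 k ^+ 2.
Proof.
rewrite (bigD1 i) //= lerDl; apply: sumr_ge0 => k _; exact: sqr_ge0.
Qed.

Lemma absM (c : R) N (i j : 'I_N) : 0 < c ->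
  `|Mm c N i j| = 'C(i, j)%:R * (P c i / P c j).
Proof.
move=> hc; rewrite mxE !normrM normrX normrN normr1 expr1n mul1r.
rewrite !ger0_norm ?mulrA; [reflexivity| |exact: (ltW (poch_gt0 _ hc))|exact: ler0n].
rewrite invr_ge0; exact: (ltW (poch_gt0 _ hc)).
Qed.

Lemma sumAbsM (c : R) N (i : 'I_N) : 0 < c ->
  \sum_(j < N) `|Mm c N i j| = P c i * sx c i.
Proof.
move=> hc; rewrite (eq_bigr (fun j : 'I_N => 'C(i, j)%:R * (P c i / P c j))); last by move=> j _; rewrite absM.
rewrite (@sumC_widen i N (fun j => P c i / P c j) (ltn_ord i)) /sx mulr_sumr.
apply: eq_bigr => j _; rewrite mulrCA; reflexivity.
Qed.

Lemma eig_bound (c lam : R) n : 0 < c ->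
  eigenvalue (\matrix_(j < n.+1, k < n.+1) P c (j + k)) lam ->
  (\sum_(l < n.+1) (l`!)%:R / P c l * (P c l / (l`!)%:R * sx c l) ^+ 2)^-1 <= lam.
Proof.
move=> hc /eigenvalueP [v hv vn0].
rewrite F1 // in hv.
have LM : Lm c n.+1 *m Mm c n.+1 = 1%:M := F2 n.+1 hc.
have ML : Mm c n.+1 *m Lm c n.+1 = 1%:M := mulmx1C LM.
pose z := v *m (Mm c n.+1)^T.
pose y := v *m Lm c n.+1.
have h1 : lam *: z = y *m diag_mx (dv c n.+1).
  by rewrite /z /y scalemxAl -hv -!mulmxA -trmx_mul ML trmx1 mulmx1 mulmxA.
have h2 : v *m v^T = z *m y^T.
  by rewrite /z /y trmx_mul -mulmxA (mulmxA (Mm c n.+1)^T) -trmx_mul LM trmx1 mul1mx.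
pose Nv := \sum_(i < n.+1) v 0 i ^+ 2.
have hNv : Nv = \sum_(i < n.+1) z 0 i * y 0 i.
  have e := congr1 (fun A : 'M[R]_1 => A 0 0) h2; move: e; rewrite /= !mxE => e.
  rewrite /Nv (eq_bigr (fun i : 'I_n.+1 => v 0 i * v^T i 0)); last by move=> i _; rewrite mxE expr2.
  rewrite e; apply: eq_bigr => i _; rewrite [y^T i 0]mxE; reflexivity.
have hd i : 0 < dv c n.+1 0 i by rewrite mxE mulr_gt0 ?ltr0n ?fact_gt0 ?poch_gt0.
have hzy i : y 0 i = lam * z 0 i / dv c n.+1 0 i.
  have e := congr1 (fun A : 'rV[R]_n.+1 => A 0 i) h1; move: e; rewrite /= mul_mx_diag !mxE => e.
  rewrite e mulfK; [reflexivity | exact: mulf_neq0 (fact_neq0 i) (poch_neq0 i hc)].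
pose Q := \sum_(i < n.+1) z 0 i ^+ 2 / dv c n.+1 0 i.
have hNQ : Nv = lam * Q.
  rewrite hNv /Q mulr_sumr; apply: eq_bigr => i _; rewrite hzy.
  have hdi := hd i; move: hdi; rewrite lt0r => /andP [/eqP hdi _]; rfield; tauto.
have hQ0 : 0 <= Q.
  apply: sumr_ge0 => i _; apply: mulr_ge0; [exact: sqr_ge0| rewrite invr_ge0; exact: ltW].
have hNv0 : 0 <= Nv by apply: sumr_ge0 => i _; exact: sqr_ge0.
have hvj j : `|v 0 j| <= Num.sqrt Nv.
  rewrite -sqrtr_sqr ler_sqrt //; exact: le_sum_sq.
have hz i : `|z 0 i| <= Num.sqrt Nv * (P c i * sx c i).
  rewrite -sumAbsM // mulr_sumr mxE.
  apply: le_trans (ler_norm_sum _ _ _) _; apply: ler_sum => j _.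
  rewrite mxE normrM mulrC [in X in _ <= X]mulrC; apply: ler_wpM2l; [exact: normr_ge0 | exact: hvj].
have hz2 i : z 0 i ^+ 2 <= Nv * (P c i * sx c i) ^+ 2.
  rewrite -real_normK ?num_real // -[Nv]sqr_sqrtr // -exprMn !expr2.
  by apply: ler_pM; try exact: normr_ge0; exact: hz.
pose S := \sum_(l < n.+1) (l`!)%:R / P c l * (P c l / (l`!)%:R * sx c l) ^+ 2.
have hQS : Q <= Nv * S.
  rewrite /Q /S mulr_sumr; apply: ler_sum => i _.
  have -> : (i`!)%:R / P c i * (P c i / (i`!)%:R * sx c i) ^+ 2 = (P c i * sx c i) ^+ 2 / dv c n.+1 0 i.
    have hf := fact_neq0 i; have hp := poch_neq0 i hc.
    rewrite mxE; move: hf hp => /eqP hf /eqP hp; rfield; tauto.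
  rewrite mulrA; apply: ler_wpM2r; [rewrite invr_ge0; exact: ltW | exact: hz2].
have [i hi] : exists i, v 0 i != 0.
  case: (pickP (fun i => v 0 i != 0)) => [i hi | hnone]; first by exists i.
  have v0 : v = 0.
    apply/rowP => i; rewrite mxE; apply/eqP; move: (hnone i) => /= /negbFE; exact.
  by move: vn0; rewrite v0 eqxx.
have hNvp : 0 < Nv.
  apply: lt_le_trans (le_sum_sq v i); rewrite lt0r sqr_ge0 andbT sqrf_eq0; exact: hi.
have hlam : 0 < lam.
  rewrite ltNge; apply/negP => hl.
  have : Nv <= 0 by rewrite hNQ; apply: mulr_le0_ge0.
  by rewrite leNgt hNvp.
have h1S : 1 <= lam * S.
  rewrite -(ler_pMr _ hNvp); apply: le_trans (_ : lam * (Nv * S) <= _).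
    by rewrite {1}hNQ; apply: ler_wpM2l; [exact: ltW | exact: hQS].
  by rewrite mulrCA; apply: le_refl.
have hS : 0 < S.
  have : 0 < lam * S by apply: lt_le_trans h1S; exact: ltr01.
  by rewrite pmulr_rgt0.
rewrite -/S -(ler_pM2r hS) mulVf; [exact: h1S | exact: negbT (gt_eqF hS)].
Qed.

End Lag.

Unset Implicit Arguments. Set Strict Implicit.

Theorem mainTheorem3 (R : rcfType) (a : R) (n : nat) (ha : -1 < a) :
  (forall lam : R, eigenvalue (hankel_poch n a) lam ->
     (\sum_(l < n.+1) (l`!)%:R / poch (a + 1) l * (laguerre l a (-1)) ^+ 2)^-1
       <= lam)
  /\
  (\sum_(l < n.+1) (l`!)%:R / poch (a + 1) l * (laguerre l a (-1)) ^+ 2)^-1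
  = poch (a + 1) n / ((n.+1)`!)%:R *
    (laguerre n (a + 1) (-1) * laguerre n a (-1)
     - laguerre n.+1 a (-1) * laguerre_pred n (a + 1) (-1))^-1.
Proof.
have hc : 0 < a + 1 by rewrite -ltrBlDr sub0r.
split.
  move=> lam hl.
  rewrite (eq_bigr (fun l : 'I_n.+1 => (l`!)%:R / poch (a + 1) l * (poch (a + 1) l / (l`!)%:R * sx (a + 1) l) ^+ 2)); last first.
    by move=> l _; rewrite lag_s.
  exact: eig_bound hc hl.
by rewrite CD2 // invfM invf_div.
Qed.
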